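(* Let $\mathcal{A}\in\mathbb{R}^{d\times\cdots\times d}$ be an order-$k$ real tensor with the same dimension $d$ in all modes. For every level $1\le\ell\le k$, \[ d^{-(k-\ell)/2}\max_{\pi\in\mathcal{P}^\ell_{[k]}}\|\mathrm{Unfold}_\pi(\mathcal{A})\|_\sigma\le\|\mathcal{A}\|_\sigma\le\min_{\pi\in\mathcal{P}^\ell_{[k]}}\|\mathrm{Unfold}_\pi(\mathcal{A})\|_\sigma . \]
   Context: For a real tensor $\mathcal{T}\in\mathbb{R}^{e_1\times\cdots\times e_m}$, $\|\mathcal{T}\|_\sigma=\sup\{\sum t_{i_1\dots i_m}x^{(1)}_{i_1}\cdots x^{(m)}_{i_m}:\ \mathbf{x}_n\in\mathbb{R}^{e_n},\ \|\mathbf{x}_n\|_2=1\}$. $\mathcal{P}^\ell_{[k]}$ is the set of partitions of $[k]=\{1,\dots,k\}$ into exactly $\ell$ nonempty blocks. Unfolding: for $\pi=\{B_1,\dots,B_\ell\}$, $\mathrm{Unfold}_\pi(\mathcal{A})$ is the order-$\ell$ tensor of dimensions $(d^{|B_1|},\dots,d^{|B_\ell|})$ whose entry at $(m_1,\dots,m_\ell)$ is $a_{i_1\dots i_k}$, where $m_j$ corresponds to $(i_r)_{r\in B_j}$ under a fixed bijection $[d]^{B_j}\to[d^{|B_j|}]$. *)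

(* Defs.v *)
From HB Require Import structures.
From mathcomp Require Import all_boot all_order all_algebra.
From mathcomp Require Import boolp classical_sets reals.
Unset Printing Implicit Defensive.
Import Order.TTheory GRing.Theory Num.Theory.
Local Open Scope ring_scope.
Local Open Scope classical_set_scope.

Definition tindex (m : nat) (e : 'I_m -> nat) := {dffun forall j : 'I_m, 'I_(e j)}.

Definition tensor (R : realType) (m : nat) (e : 'I_m -> nat) := tindex m e -> R.

Definition spec_norm (R : realType) (m : nat) (e : 'I_m -> nat)
    (T : tensor R m e) : R :=
  sup [set v : R | exists x : forall j : 'I_m, 'I_(e j) -> R,
         (forall j, \sum_(i < e j) x j i ^+ 2 = 1) /\
         v = \sum_(t : tindex m e) T t * \prod_(j < m) x j (t j)].

Definition cube (k d : nat) : 'I_k -> nat := fun _ => d.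

(* A partition of [k] into exactly l nonempty blocks B_1, ..., B_l is encoded
   by its block-labelling f : [k] -> [l], B_j = f^{-1}(j), with f surjective. *)
Definition partition_l (k l : nat) (f : {ffun 'I_k -> 'I_l}) : Prop :=
  forall j : 'I_l, exists r : 'I_k, f r = j.

Definition block (k l : nat) (f : {ffun 'I_k -> 'I_l}) (j : 'I_l) : {set 'I_k} :=
  [set r | f r == j].

Definition unfold_dims (k l d : nat) (f : {ffun 'I_k -> 'I_l}) : 'I_l -> nat :=
  fun j => (d ^ #|block k l f j|)%N.

Lemma card_block_idx (k l d : nat) (f : {ffun 'I_k -> 'I_l}) (j : 'I_l) :
  #|{ffun {r : 'I_k | f r == j} -> 'I_d}| = unfold_dims k l d f j.
Proof.
by rewrite card_ffun card_ord card_sig /unfold_dims /block cardsE.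
Qed.

Definition block_decode (k l d : nat) (f : {ffun 'I_k -> 'I_l}) (j : 'I_l)
    (m : 'I_(unfold_dims k l d f j)) : {ffun {r : 'I_k | f r == j} -> 'I_d} :=
  enum_val (cast_ord (esym (@card_block_idx k l d f j)) m).

(* Unfold_pi(A): entry at (m_1,...,m_l) is a_{i_1...i_k}, where (i_r)_{r in B_j}
   corresponds to m_j under the fixed bijection. *)
Definition unfold (R : realType) (k l d : nat) (f : {ffun 'I_k -> 'I_l})
    (A : tensor R k (cube k d)) : tensor R l (unfold_dims k l d f) :=
  fun m => A [ffun r : 'I_k =>
                @block_decode k l d f (f r) (m (f r)) (exist (fun s => f s == f r) r (eqxx (f r)))].

(* Main.v *)
Require Import Defs.
From HB Require Import structures.
From mathcomp Require Import all_boot all_order all_algebra.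
From mathcomp Require Import boolp classical_sets reals.
From mathcomp Require Import ring lra.
Set Implicit Arguments. Unset Strict Implicit.
Import Order.TTheory GRing.Theory Num.Theory.
Local Open Scope ring_scope.

Definition contr (R : realType) (m : nat) (e : 'I_m -> nat) (T : tensor R m e)
  (x : forall j : 'I_m, 'I_(e j) -> R) : R :=
  \sum_(t : tindex m e) T t * \prod_(j < m) x j (t j).

Definition feas (R : realType) (m : nat) (e : 'I_m -> nat)
  (x : forall j : 'I_m, 'I_(e j) -> R) : Prop :=
  forall j, \sum_(i < e j) x j i ^+ 2 = 1.

Arguments contr {R m e}.
Arguments feas {R m e}.

Lemma spec_normE (R : realType) m e (T : tensor R m e) :
  spec_norm R m e T = sup [set v : R | exists x, feas x /\ v = contr T x].
Proof. by []. Qed.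

Lemma sq_le_sum (R : realType) n (F : 'I_n -> R) i : F i ^+ 2 <= \sum_(i0 < n) F i0 ^+ 2.
Proof.
rewrite (bigD1 i) //= lerDl; apply: sumr_ge0 => j _; exact: sqr_ge0.
Qed.

Lemma feas_le1 (R : realType) m e (x : forall j : 'I_m, 'I_(e j) -> R) j i :
  feas x -> `|x j i| <= 1.
Proof.
move=> fx; have := sq_le_sum (x j) i; rewrite fx => h.
rewrite ler_norml; apply/andP; split; nra.
Qed.

Lemma contr_bound (R : realType) m e (T : tensor R m e) x :
  feas x -> `|contr T x| <= \sum_t `|T t|.
Proof.
move=> fx; apply: le_trans (ler_norm_sum _ _ _) _.
apply: ler_sum => t _; rewrite normrM normr_prod.
rewrite -[leRHS]mulr1; apply: ler_wpM2l => //.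
apply: prodr_ile1 => j _; rewrite normr_ge0 /=; exact: feas_le1.
Qed.

Lemma feas_ex (R : realType) m e : (forall j, 0 < e j)%N ->
  exists x : forall j : 'I_m, 'I_(e j) -> R, feas x.
Proof.
move=> he; exists (fun j (i : 'I_(e j)) => ((val i == 0)%N)%:R : R) => j.
rewrite (bigD1 (Ordinal (he j))) //= expr1n big1 ?addr0 // => i hi.
have -> : (val i == 0)%N = false.
  by apply/negbTE; apply: contra hi => /eqP h; apply/eqP/val_inj.
by rewrite expr0n.
Qed.

Lemma has_sup_S (R : realType) m e (T : tensor R m e) : (forall j, 0 < e j)%N ->
  has_sup [set v : R | exists x, feas x /\ v = contr T x].
Proof.
move=> he; split.
  by have [x fx] := feas_ex R he; exists (contr T x); exists x.
exists (\sum_t `|T t|) => v [x [fx ->]].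
exact: le_trans (ler_norm _) (contr_bound T fx).
Qed.

Lemma le_spec (R : realType) m e (T : tensor R m e) x : (forall j, 0 < e j)%N ->
  feas x -> contr T x <= spec_norm R m e T.
Proof.
by move=> he fx; apply: (sup_upper_bound (has_sup_S T he)); exists x.
Qed.

Lemma spec_le (R : realType) m e (T : tensor R m e) M : (forall j, 0 < e j)%N ->
  (forall x, feas x -> contr T x <= M) -> spec_norm R m e T <= M.
Proof.
move=> he h; apply: ge_sup; first by case: (has_sup_S T he).
by move=> v [x [fx ->]]; exact: h.
Qed.

Lemma neg_le_spec (R : realType) m e (T : tensor R m e) x : (0 < m)%N ->
  (forall j, 0 < e j)%N -> feas x -> - contr T x <= spec_norm R m e T.
Proof.
move=> hm he fx; pose j0 := Ordinal hm.
pose x' := fun j (i : 'I_(e j)) => if j == j0 then - x j i else x j i.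
have fx' : feas x'.
  by move=> j; rewrite /x'; case: eqP => _; rewrite ?fx //; under eq_bigr do rewrite sqrrN; rewrite fx.
have -> : - contr T x = contr T x'.
  rewrite /contr -sumrN; apply: eq_bigr => t _.
  rewrite (bigD1 j0) //= [in RHS](bigD1 j0) //=.
  have -> : \prod_(j < m | j != j0) x' j (t j) = \prod_(j < m | j != j0) x j (t j).
    by apply: eq_bigr => j /negbTE; rewrite /x' => ->.
  rewrite /x' eqxx.
  by rewrite mulNr mulrN.
exact: le_spec.
Qed.

Lemma abs_contr_le (R : realType) m e (T : tensor R m e) x : (0 < m)%N ->
  (forall j, 0 < e j)%N -> feas x -> `|contr T x| <= spec_norm R m e T.
Proof.
move=> hm he fx; rewrite ler_norml le_spec // andbT.
by rewrite lerNl; exact: neg_le_spec.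
Qed.

Lemma spec_ge0 (R : realType) m e (T : tensor R m e) : (0 < m)%N ->
  (forall j, 0 < e j)%N -> 0 <= spec_norm R m e T.
Proof.
move=> hm he; have [x fx] := feas_ex R he.
exact: le_trans (normr_ge0 _) (abs_contr_le T hm he fx).
Qed.

Lemma homog (R : realType) m e (T : tensor R m e) (x : forall j : 'I_m, 'I_(e j) -> R) :
  (0 < m)%N -> (forall j, 0 < e j)%N ->
  `|contr T x| <= spec_norm R m e T * \prod_j Num.sqrt (\sum_i x j i ^+ 2).
Proof.
move=> hm he.
pose n j := Num.sqrt (\sum_i x j i ^+ 2).
have n0 j : 0 <= n j by exact: sqrtr_ge0.
case: (pselect (forall j, n j != 0)) => [nz|]; last first.
  move=> /existsNP [j]; move/negP; rewrite negbK => /eqP nj.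
  have xj i : x j i = 0.
    have : \sum_i x j i ^+ 2 = 0.
      by move: nj; rewrite /n => /eqP; rewrite sqrtr_eq0 => h; apply/eqP; rewrite eq_le h sumr_ge0 // => *; exact: sqr_ge0.
    move/eqP; rewrite psumr_eq0; last by move=> *; exact: sqr_ge0.
    by move/allP/(_ i (mem_index_enum _)) => /=; rewrite sqrf_eq0 => /eqP.
  have -> : contr T x = 0.
    rewrite /contr big1 // => t _; rewrite (bigD1 j) //= xj mul0r mulr0 //.
  by rewrite normr0; apply: mulr_ge0; [exact: spec_ge0 | apply: prodr_ge0 => j' _; exact: n0].
pose x' := fun j (i : 'I_(e j)) => x j i / n j.
have fx' : feas x'.
  move=> j; rewrite /x'; under eq_bigr do rewrite expr_div_n.
  rewrite -mulr_suml sqr_sqrtr ?divff //; last by apply: sumr_ge0 => *; exact: sqr_ge0.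
  by move: (nz j); rewrite /n sqrtr_eq0 -ltNge => h; rewrite gt_eqF.
have -> : contr T x = contr T x' * \prod_j n j.
  rewrite /contr mulr_suml; apply: eq_bigr => t _; rewrite -mulrA -big_split /=.
  congr (_ * _); apply: eq_bigr => j _; rewrite /x' divfK //.
rewrite normrM [`|\prod_j _|]ger0_norm ?prodr_ge0 //.
apply: ler_wpM2r; first exact: prodr_ge0.
exact: abs_contr_le.
Qed.



Definition restr (k l d : nat) (f : {ffun 'I_k -> 'I_l}) (j : 'I_l)
  (t : {ffun 'I_k -> 'I_d}) : {ffun {r : 'I_k | f r == j} -> 'I_d} :=
  [ffun s => t (val s)].

Definition enc (k l d : nat) (f : {ffun 'I_k -> 'I_l}) (j : 'I_l)
  (t : {ffun 'I_k -> 'I_d}) : 'I_(unfold_dims k l d f j) :=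
  cast_ord (card_block_idx k l d f j) (enum_rank (restr f j t)).

Lemma decK k l d f j t : block_decode k l d f j (@enc k l d f j t) = restr f j t.
Proof. by rewrite /block_decode /enc cast_ordK enum_rankK. Qed.

Lemma enc_eq k l d f j t m :
  restr f j t = block_decode k l d f j m -> @enc k l d f j t = m.
Proof.
by move=> h; rewrite /enc h /block_decode enum_valK cast_ordKV.
Qed.

Lemma enc_block k l d (f : {ffun 'I_k -> 'I_l}) j (t t' : {ffun 'I_k -> 'I_d}) :
  (forall r, f r == j -> t r = t' r) -> @enc k l d f j t = enc f j t'.
Proof.
move=> h; rewrite /enc (_ : restr f j t = restr f j t') //.
by apply/ffunP => s; rewrite !ffunE; exact: (h (val s) (valP s)).
Qed.

Lemma transport k l d (f : {ffun 'I_k -> 'I_l}) (m : tindex l (unfold_dims k l d f))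
  r j (H : f r == j) :
  block_decode k l d f (f r) (m (f r)) (exist _ r (eqxx (f r)))
  = block_decode k l d f j (m j) (exist _ r H).
Proof.
have e := eqP H; subst j.
by congr (block_decode _ _ _ _ _ _ (exist _ r _)); apply: bool_irrelevance.
Qed.

Definition phi k l d (f : {ffun 'I_k -> 'I_l}) (m : tindex l (unfold_dims k l d f))
  : {ffun 'I_k -> 'I_d} :=
  [ffun r : 'I_k => @block_decode k l d f (f r) (m (f r)) (exist (fun s => f s == f r) r (eqxx (f r)))].

Definition psi k l d (f : {ffun 'I_k -> 'I_l}) (t : {ffun 'I_k -> 'I_d})
  : tindex l (unfold_dims k l d f) :=
  @finfun _ (fun j => 'I_(unfold_dims k l d f j)) (fun j => enc f j t).

Lemma unfoldE (R : realType) k l d f (A : tensor R k (cube k d)) m :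
  unfold R k l d f A m = A (phi m).
Proof. by []. Qed.

Lemma phiK k l d f : cancel (@phi k l d f) (@psi k l d f).
Proof.
move=> m; apply/ffunP => j; rewrite ffunE; apply: enc_eq.
apply/ffunP => -[r H]; rewrite !ffunE /=; exact: transport.
Qed.

Lemma psiK k l d f : cancel (@psi k l d f) (@phi k l d f).
Proof.
move=> t; apply/ffunP => r; rewrite ffunE /psi ffunE decK ffunE //.
Qed.

Lemma phi_bij k l d f : bijective (@phi k l d f).
Proof. by exists (@psi k l d f); [exact: phiK | exact: psiK]. Qed.

Lemma enc_phi k l d f m j : @enc k l d f j (phi m) = m j.
Proof. by have := phiK m; move/ffunP => /(_ j); rewrite /psi ffunE. Qed.



Definition encg k l d (f : {ffun 'I_k -> 'I_l}) j (g : {ffun {r : 'I_k | f r == j} -> 'I_d}) :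
  'I_(unfold_dims k l d f j) := cast_ord (card_block_idx k l d f j) (enum_rank g).

Lemma encgK k l d f j : cancel (@encg k l d f j) (block_decode k l d f j).
Proof. by move=> g; rewrite /block_decode /encg cast_ordK enum_rankK. Qed.

Lemma decgK k l d f j : cancel (block_decode k l d f j) (@encg k l d f j).
Proof. by move=> m; rewrite /block_decode /encg enum_valK cast_ordKV. Qed.

Lemma big_sig_prod (R : comNzRingType) (I : finType) (P : pred I) (F : I -> R) :
  \prod_(i | P i) F i = \prod_(s : {i | P i}) F (val s).
Proof.
rewrite (reindex_omap (val : {i | P i} -> I) insub); last first.
  by move=> i Pi; rewrite insubT.
by apply: eq_bigl=> -[i iP]/=; rewrite insubT iP /= eqxx.
Qed.

Definition dec k l d (f : {ffun 'I_k -> 'I_l}) j (m : 'I_(unfold_dims k l d.+1 f j)) (r : 'I_k)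
  : 'I_d.+1 :=
  match (insub r : option {r0 : 'I_k | f r0 == j}) with
  | Some s => block_decode k l d.+1 f j m s
  | None => ord0
  end.

Arguments dec {k l d} f j m r.
Arguments encg {k l d} f j g.

Lemma decE k l d (f : {ffun 'I_k -> 'I_l}) j m (r : 'I_k) (H : f r == j) :
  @dec k l d f j m r = block_decode k l d.+1 f j m (exist _ r H).
Proof. by rewrite /dec insubT. Qed.

Definition yof (R : realType) k l d (f : {ffun 'I_k -> 'I_l})
  (x : forall r : 'I_k, 'I_(cube k d.+1 r) -> R) (j : 'I_l) (m : 'I_(unfold_dims k l d.+1 f j)) : R :=
  \prod_(r | f r == j) x r (dec f j m r).

Arguments yof {R k l d} f x j m.

Lemma yof_feas (R : realType) k l d f x : feas x -> feas (@yof R k l d f x).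
Proof.
move=> fx j; rewrite /yof.
rewrite (reindex (@encg k l d.+1 f j)); last first.
  by apply: onW_bij; exists (block_decode k l d.+1 f j); [exact: encgK | exact: decgK].
transitivity (\sum_(g : {ffun {r0 : 'I_k | f r0 == j} -> 'I_d.+1})
   \prod_(s : {r0 : 'I_k | f r0 == j}) x (val s) (g s) ^+ 2).
  apply: eq_bigr => g _; rewrite big_sig_prod -prodrXl; apply: eq_bigr => s _.
  rewrite (decE _ (valP s)) encgK (_ : exist _ (val s) _ = s) //; exact: val_inj.
rewrite /= -(bigA_distr_bigA (fun s (i : 'I_d.+1) => x (val s) i ^+ 2)) /=.
by rewrite big1 // => s _; exact: fx.
Qed.

Lemma contr_yof (R : realType) k l d f (A : tensor R k (cube k d.+1)) x :
  contr (unfold R k l d.+1 f A) (@yof R k l d f x) = contr A x.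
Proof.
rewrite /contr [RHS](reindex (@phi k l d.+1 f)); last by apply: onW_bij; exact: phi_bij.
apply: eq_bigr => m _; rewrite unfoldE; congr (_ * _).
rewrite [RHS](partition_big (fun r => f r) xpredT) //=.
apply: eq_bigr => j _; rewrite /yof; apply: eq_bigr => r H.
by rewrite (decE _ H) /phi ffunE (transport m H).
Qed.



Lemma cs_sum (R : realType) (I : finType) (b : I -> R) :
  (\sum_i b i) ^+ 2 <= #|I|%:R * \sum_i b i ^+ 2.
Proof.
have h : 0 <= \sum_i \sum_j (b i - b j) ^+ 2.
  by apply: sumr_ge0 => i _; apply: sumr_ge0 => j _; exact: sqr_ge0.
have e1 i j : (b i - b j)^+2 = b i^+2 + b j^+2 - 2 * (b i * b j) by ring.
move: h.
under eq_bigr do under eq_bigr do rewrite e1.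
under eq_bigr do rewrite sumrB big_split /= -mulr_sumr -mulr_sumr sumr_const.
rewrite sumrB big_split /= -mulr_sumr.
have f1 : \sum_i b i * (b i *+ #|I|) = #|I|%:R * \sum_i b i ^+ 2.
  rewrite mulr_sumr; apply: eq_bigr => i _; rewrite mulrnAr mulr_natl expr2 //.
have f2 : \sum_(i : I) \sum_i0 b i0 ^+ 2 = #|I|%:R * \sum_i b i ^+ 2.
  by rewrite sumr_const mulr_natl.
have f3 : \sum_i \sum_i0 b i * b i0 = (\sum_i b i) ^+ 2.
  by rewrite expr2 big_distrl /=; apply: eq_bigr => i _; rewrite big_distrr.
rewrite f1 f2 f3.
set S2 := \sum_i b i ^+ 2.  set S1 := \sum_i b i. set n := #|_|%:R.
move=> h; nra.
Qed.

Definition upd k l d (f : {ffun 'I_k -> 'I_l}) (rho : 'I_l -> 'I_k)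
  (t : {ffun 'I_k -> 'I_d}) (u : {ffun 'I_l -> 'I_d}) : {ffun 'I_k -> 'I_d} :=
  [ffun r => if r == rho (f r) then u (f r) else t r].

Definition comprho k l d (rho : 'I_l -> 'I_k) (t : {ffun 'I_k -> 'I_d}) : {ffun 'I_l -> 'I_d} :=
  [ffun j => t (rho j)].

Lemma comprho_upd k l d (f : {ffun 'I_k -> 'I_l}) rho (hr : forall j, f (rho j) = j) t u :
  comprho rho (@upd k l d f rho t u) = u.
Proof. by apply/ffunP => j; rewrite !ffunE hr eqxx. Qed.

Lemma upd_comprho k l d (f : {ffun 'I_k -> 'I_l}) rho t u :
  @upd k l d f rho (upd f rho t u) (comprho rho t) = t.
Proof.
by apply/ffunP => r; rewrite !ffunE; case: eqP => // <-.
Qed.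

Lemma inv_sum (R : realType) k l d (f : {ffun 'I_k -> 'I_l}) rho
  (hr : forall j, f (rho j) = j) (F : {ffun 'I_k -> 'I_d} -> R) :
  \sum_t \sum_(u : {ffun 'I_l -> 'I_d}) F (upd f rho t u) = (d ^ l)%:R * \sum_t F t.
Proof.
rewrite pair_big /=.
pose sg := fun p : {ffun 'I_k -> 'I_d} * {ffun 'I_l -> 'I_d} =>
  (upd f rho p.1 p.2, comprho rho p.1).
have sgK : cancel sg sg.
  by move=> [t u]; rewrite /sg /= upd_comprho comprho_upd.
transitivity (\sum_(q : {ffun 'I_k -> 'I_d} * {ffun 'I_l -> 'I_d}) F q.1).
  rewrite [RHS](reindex sg) /=; last by apply: onW_bij; exists sg.
  by apply: eq_big.
rewrite -(pair_big xpredT xpredT (fun t (u : {ffun 'I_l -> 'I_d}) => F t)) /=.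
rewrite mulr_sumr; apply: eq_bigr => t _.
by rewrite sumr_const card_ffun !card_ord mulr_natl.
Qed.

Lemma rep_prod (R : realType) k l (f : {ffun 'I_k -> 'I_l}) rho
  (hr : forall j, f (rho j) = j) (G : 'I_l -> R) :
  \prod_(r < k) (if r == rho (f r) then G (f r) else 1) = \prod_(j < l) G j.
Proof.
rewrite -big_mkcond /=.
rewrite (reindex_onto rho f); last by move=> r /eqP <-.
apply: eq_big => [j|j _]; last by rewrite hr.
by rewrite hr !eqxx.
Qed.

Lemma inj_sum_le (R : realType) (I J : finType) (g : I -> J) (F : J -> R) :
  injective g -> (forall j, 0 <= F j) -> \sum_i F (g i) <= \sum_j F j.
Proof.
move=> ig F0.
rewrite [leRHS](bigID (fun j => j \in [set g i | i in I])) /=.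
rewrite -[leLHS]addr0; apply: lerD; last by apply: sumr_ge0.
rewrite big_imset /=; last by move=> x y _ _; exact: ig.
by rewrite le_eqVlt; apply/orP; left; apply/eqP; apply: eq_bigl => i; rewrite inE.
Qed.



Definition Yv (R : realType) k l d (f : {ffun 'I_k -> 'I_l})
  (y : forall j, 'I_(unfold_dims k l d f j) -> R) (j : 'I_l) (t : {ffun 'I_k -> 'I_d}) : R :=
  y j (enc f j t).

Definition setr k d (t : {ffun 'I_k -> 'I_d}) (r : 'I_k) (i : 'I_d) : {ffun 'I_k -> 'I_d} :=
  [ffun r' => if r' == r then i else t r'].

Definition xt (R : realType) k l d (f : {ffun 'I_k -> 'I_l}) (rho : 'I_l -> 'I_k)
  (y : forall j, 'I_(unfold_dims k l d f j) -> R) (t : {ffun 'I_k -> 'I_d}) :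
  forall r : 'I_k, 'I_(cube k d r) -> R :=
  fun r i => if r == rho (f r) then Yv y (f r) (setr t r i) else ((i == t r)%:R).

Arguments Yv {R k l d} f y j t.
Arguments setr {k d} t r i.
Arguments xt {R k l d} f rho y t r i.

Lemma Yv_block (R : realType) k l d (f : {ffun 'I_k -> 'I_l}) y j (t t' : {ffun 'I_k -> 'I_d}) :
  (forall r, f r == j -> t r = t' r) -> @Yv R k l d f y j t = Yv f y j t'.
Proof. by move=> h; rewrite /Yv (enc_block h). Qed.

Lemma stepa (R : realType) k l d (f : {ffun 'I_k -> 'I_l}) (A : tensor R k (cube k d)) y :
  contr (unfold R k l d f A) y = \sum_(t : {ffun 'I_k -> 'I_d}) A t * \prod_j Yv f y j t.
Proof.
rewrite [RHS](reindex (@phi k l d f)); last by apply: onW_bij; exact: phi_bij.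
apply: eq_bigr => m _; rewrite unfoldE; congr (_ * _).
by apply: eq_bigr => j _; rewrite /Yv enc_phi.
Qed.

Lemma eqle (R : realType) (x y : R) : x = y -> x <= y.
Proof. by move->. Qed.

Lemma sum_ind (R : realType) d (a : 'I_d) : \sum_(i < d) ((i == a)%:R : R) ^+ 2 = 1.
Proof.
rewrite (bigD1 a) //= eqxx expr1n big1 ?addr0 // => i /negbTE ->; by rewrite expr0n.
Qed.

Lemma stepb (R : realType) k l d (f : {ffun 'I_k -> 'I_l}) rho (hr : forall j, f (rho j) = j)
  (A : tensor R k (cube k d)) y t : (0 < k)%N -> (0 < d)%N ->
  `|contr A (xt f rho y t)| <=
    spec_norm R k (cube k d) A * \prod_j Num.sqrt (\sum_i Yv f y j (setr t (rho j) i) ^+ 2).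
Proof.
move=> hk hd; apply: le_trans (homog _ _ hk (fun _ => hd)) _.
apply: ler_wpM2l; first by apply: spec_ge0.
rewrite -(rep_prod hr); apply: eqle; apply: eq_bigr => r _; rewrite /xt; case: eqP => [e|_].
  by congr Num.sqrt; apply: eq_bigr => i _; rewrite -e.
by rewrite sum_ind sqrtr1.
Qed.


Lemma stepc_pt (R : realType) k l d (f : {ffun 'I_k -> 'I_l}) rho (hr : forall j, f (rho j) = j)
  y (t t' : {ffun 'I_k -> 'I_d}) :
  \prod_r xt f rho y t r (t' r) =
  if t' == upd f rho t (comprho rho t') then \prod_j @Yv R k l d f y j t' else 0.
Proof.
case: ifP => [/eqP e | ne].
  rewrite -(rep_prod hr); apply: eq_bigr => r _; rewrite /xt.
  case: eqP => [er | ner].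
    apply: Yv_block => r' /eqP fr'; rewrite ffunE; case: eqP => [-> // | ne'].
    rewrite [in RHS]e ffunE; case: eqP => // e'; exfalso; apply: ne'.
    by rewrite e' fr' -er.
  by rewrite {1}e ffunE; move/eqP/negbTE: ner => ->; rewrite eqxx.
have : [exists r, t' r != upd f rho t (comprho rho t') r].
  move: ne; apply: contraFT => /existsPn h; apply/eqP/ffunP => r; apply/eqP.
  by move: (h r); rewrite negbK.
case/existsP => r hne.
rewrite (bigD1 r) //= /xt.
move: hne; rewrite ffunE; case: (r =P rho (f r)) => [e|_] hne.
  by exfalso; move: hne; rewrite ffunE -e eqxx.
by rewrite (negbTE hne) mul0r.
Qed.

Lemma stepc (R : realType) k l d (f : {ffun 'I_k -> 'I_l}) rho (hr : forall j, f (rho j) = j)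
  (A : tensor R k (cube k d)) y :
  \sum_(t : {ffun 'I_k -> 'I_d}) contr A (xt f rho y t) = (d ^ l)%:R * contr (unfold R k l d f A) y.
Proof.
rewrite stepa -(inv_sum hr); apply: eq_bigr => t _.
rewrite /contr.
under eq_bigr => t' _ do rewrite (stepc_pt hr).
rewrite /=.
under eq_bigr => t' _ do rewrite (fun_if (fun v => A t' * v)) mulr0.
rewrite -big_mkcond /=.
rewrite (reindex_onto (upd f rho t) (comprho rho)); last by move=> t' /eqP <-.
apply: eq_bigl => u; rewrite comprho_upd // !eqxx //.
Qed.

Definition zt k l d (f : {ffun 'I_k -> 'I_l}) (j : 'I_l) (t : {ffun 'I_k -> 'I_d.+1}) :
  {ffun 'I_k -> 'I_d.+1} := [ffun r => if f r == j then t r else ord0].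

Lemma zt_idem k l d f j t : @zt k l d f j (zt f j t) = zt f j t.
Proof. by apply/ffunP => r; rewrite !ffunE; case: (f r == j). Qed.

Lemma W_sum (R : realType) k l d (f : {ffun 'I_k -> 'I_l}) y j :
  feas y ->
  \sum_(t : {ffun 'I_k -> 'I_d.+1})
     (if t == zt f j t then @Yv R k l d.+1 f y j t ^+ 2 else 0) = 1.
Proof.
move=> fy; rewrite -big_mkcond /=.
pose h := fun m : 'I_(unfold_dims k l d.+1 f j) => [ffun r => dec f j m r] : {ffun 'I_k -> 'I_d.+1}.
have hK : forall t, t == zt f j t -> h (enc f j t) = t.
  move=> t /eqP e; apply/ffunP => r; rewrite ffunE.
  case: (boolP (f r == j)) => H.
    by rewrite (decE _ H) decK ffunE.
  rewrite /dec insubF; last by apply/negbTE.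
  by rewrite e ffunE (negbTE H).
have encK : forall m, enc f j (h m) = m.
  move=> m; apply: enc_eq; apply/ffunP => s; rewrite !ffunE (decE _ (valP s)).
  by rewrite (_ : exist _ (val s) _ = s) //; exact: val_inj.
rewrite (reindex_onto h (enc f j) hK).
rewrite -(fy j); apply: eq_big => m.
  rewrite encK eqxx andbT; apply/eqP/ffunP => r; rewrite !ffunE.
  case: (boolP (f r == j)) => // H.
  by rewrite /dec insubF //; apply/negbTE.
by move=> _; rewrite /Yv encK.
Qed.

Lemma stepe (R : realType) k l d (f : {ffun 'I_k -> 'I_l}) y :
  feas y ->
  \sum_(t : {ffun 'I_k -> 'I_d.+1}) \prod_j @Yv R k l d.+1 f y j t ^+ 2 <= 1.
Proof.
move=> fy.
pose W := fun j (t : {ffun 'I_k -> 'I_d.+1}) =>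
  if t == zt f j t then @Yv R k l d.+1 f y j t ^+ 2 else 0.
have W0 j t : 0 <= W j t by rewrite /W; case: ifP => _ //; exact: sqr_ge0.
have e1 : \prod_(j < l) \sum_t W j t = 1.
  by rewrite big1 // => j _; exact: W_sum.
rewrite -[X in _ <= X]e1 bigA_distr_bigA /=.
pose g := fun t : {ffun 'I_k -> 'I_d.+1} => [ffun j => zt f j t].
have ig : injective g.
  move=> t1 t2 e; apply/ffunP => r.
  have := congr1 (fun tau : {ffun 'I_l -> {ffun 'I_k -> 'I_d.+1}} => tau (f r) r) e.
  by rewrite /g !ffunE eqxx.
have := @inj_sum_le R _ _ g (fun tau : {ffun 'I_l -> {ffun 'I_k -> 'I_d.+1}} => \prod_j W j (tau j)) ig.
move=> /(_ (fun tau => @prodr_ge0 _ _ (index_enum _) xpredT _ (fun j _ => W0 j (tau j)))).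
apply: le_trans; apply: eqle; apply: eq_bigr => t _; apply: eq_bigr => j _.
rewrite /g ffunE /W zt_idem eqxx; congr (_ ^+ 2); apply: Yv_block => r H.
by rewrite ffunE H.
Qed.

Lemma stepd (R : realType) k l d (f : {ffun 'I_k -> 'I_l}) rho (hr : forall j, f (rho j) = j) y :
  feas y ->
  \sum_(t : {ffun 'I_k -> 'I_d.+1})
    \prod_j Num.sqrt (\sum_i @Yv R k l d.+1 f y j (setr t (rho j) i) ^+ 2)
  <= Num.sqrt (((d.+1) ^ k)%:R * ((d.+1) ^ l)%:R).
Proof.
move=> fy.
set a := fun t : {ffun 'I_k -> 'I_d.+1} => \prod_j Num.sqrt (\sum_i Yv f y j (setr t (rho j) i) ^+ 2).
have a0 t : 0 <= a t by apply: prodr_ge0 => j _; exact: sqrtr_ge0.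
have sa0 : 0 <= \sum_t a t by apply: sumr_ge0.
have h2 : \sum_t a t ^+ 2 <= ((d.+1) ^ l)%:R.
  have -> : \sum_t a t ^+ 2 = \sum_t \sum_(u : {ffun 'I_l -> 'I_d.+1}) \prod_j Yv f y j (upd f rho t u) ^+ 2.
    apply: eq_bigr => t _; rewrite /a -prodrXl.
    rewrite (eq_bigr (fun j => \sum_i Yv f y j (setr t (rho j) i) ^+ 2)); last first.
      by move=> j _; rewrite sqr_sqrtr // sumr_ge0 // => *; exact: sqr_ge0.
    rewrite bigA_distr_bigA /=; apply: eq_bigr => u _; apply: eq_bigr => j _.
    congr (_ ^+ 2); apply: Yv_block => r /eqP fr; rewrite !ffunE -fr.
    by case: eqP.
  rewrite (inv_sum hr (fun t => \prod_j Yv f y j t ^+ 2)) -[X in _ <= X]mulr1; apply: ler_wpM2l => //.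
  exact: stepe.
have h1 : (\sum_t a t) ^+ 2 <= ((d.+1) ^ k)%:R * ((d.+1) ^ l)%:R.
  apply: le_trans (cs_sum a) _; rewrite card_ffun !card_ord.
  by apply: ler_wpM2l.
rewrite -[X in X <= _]ger0_norm // -sqrtr_sqr ler_sqrt //.
by apply: mulr_ge0.
Qed.

Lemma lower (R : realType) k l d (f : {ffun 'I_k -> 'I_l}) rho (hr : forall j, f (rho j) = j)
  (A : tensor R k (cube k d.+1)) : (0 < k)%N -> (l <= k)%N ->
  spec_norm R l (unfold_dims k l d.+1 f) (unfold R k l d.+1 f A)
   <= Num.sqrt ((d.+1)%:R ^+ (k - l)) * spec_norm R k (cube k d.+1) A.
Proof.
move=> hk hlk; apply: spec_le; first by move=> j; rewrite /unfold_dims expn_gt0.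
move=> y fy.
have sp0 : 0 <= spec_norm R k (cube k d.+1) A by apply: spec_ge0.
have h : ((d.+1 ^ l)%:R : R) * contr (unfold R k l d.+1 f A) y
   <= spec_norm R k (cube k d.+1) A * Num.sqrt (((d.+1) ^ k)%:R * ((d.+1) ^ l)%:R).
  rewrite -(stepc hr).
  apply: le_trans (_ : _ <= \sum_t `|contr A (xt f rho y t)|) _.
    by apply: ler_sum => t _; exact: ler_norm.
  apply: le_trans (_ : _ <= \sum_t spec_norm R k (cube k d.+1) A *
     \prod_j Num.sqrt (\sum_i Yv f y j (setr t (rho j) i) ^+ 2)) _.
    by apply: ler_sum => t _; exact: stepb.
  by rewrite -mulr_sumr; apply: ler_wpM2l => //; exact: stepd.
have e : Num.sqrt (((d.+1) ^ k)%:R * ((d.+1) ^ l)%:R : R)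
   = (d.+1 ^ l)%:R * Num.sqrt ((d.+1)%:R ^+ (k - l)).
  have e1 : (((d.+1) ^ k)%:R * ((d.+1) ^ l)%:R : R)
      = ((d.+1)%:R ^+ l) ^+ 2 * (d.+1)%:R ^+ (k - l).
    rewrite -{1}(subnK hlk) expnD !natrM !natrX; ring.
  rewrite e1 sqrtrM; last exact: sqr_ge0.
  by rewrite sqrtr_sqr ger0_norm ?exprn_ge0 // natrX.
move: h; rewrite e mulrCA => h.
have hp : (0 : R) < (d.+1 ^ l)%:R by rewrite ltr0n expn_gt0.
by rewrite -(ler_pM2l hp) [X in _ <= _ * X]mulrC.
Qed.


Unset Implicit Arguments. Set Strict Implicit.


Theorem corollary4p11 (R : realType) (k d l : nat) (A : tensor R k (cube k d)) :
  (0 < d)%N -> (1 <= l)%N -> (l <= k)%N ->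
  forall f : {ffun 'I_k -> 'I_l}, partition_l k l f ->
    (Num.sqrt ((d%:R : R) ^+ (k - l)))^-1 * spec_norm R l (unfold_dims k l d f) (unfold R k l d f A)
      <= spec_norm R k (cube k d) A
    /\ spec_norm R k (cube k d) A <= spec_norm R l (unfold_dims k l d f) (unfold R k l d f A).
Proof.
case: d A => [//|d] A _ hl hlk f hf.
have hk : (0 < k)%N by apply: leq_trans hl hlk.
have [rho hr] : exists rho : 'I_l -> 'I_k, forall j, f (rho j) = j.
  by have [rho hr] := choice hf; exists rho.
split.
  have hs : (0 : R) < Num.sqrt ((d.+1)%:R ^+ (k - l)).
    by rewrite sqrtr_gt0 exprn_gt0 // ltr0n.
  rewrite -(ler_pM2l hs) mulrA mulfV ?gt_eqF // mul1r.
  exact: (lower hr).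
apply: spec_le => // x fx.
rewrite -(contr_yof (l := l) f A x).
apply: le_spec; first by move=> j; rewrite /unfold_dims expn_gt0.
exact: yof_feas.
Qed.
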